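(* The $\Sigma_1$-theory $\mathcal{T}_\varsigma$ is not smooth with respect to $\{\sigma\}$.
   Context: $\varsigma:\mathbb{N}\to\mathbb{N}$ is the Busy Beaver function: $\varsigma(n)$ is the maximum number of $1$'s that a halting Turing machine with at most $n$ states can leave on its tape, starting from an all-$0$ tape. $\Sigma_1$ is the empty signature (only equality, interpreted as identity) with one sort $\sigma$. Let $\psi_{\ge n}=\exists x_1\dots x_n.\bigwedge_{1\le i<j\le n}\neg(x_i=x_j)$, $\psi_{\le n}=\exists x_1\dots x_n\forall y.\bigvee_{i=1}^n y=x_i$, $\psi_{=n}=\psi_{\ge n}\wedge\psi_{\le n}$. $\mathcal{T}_\varsigma$ is the $\Sigma_1$-theory (class of all $\Sigma_1$-interpretations satisfying the axioms) axiomatized by $\{\psi_{\ge\varsigma(k+2)}\vee\bigvee_{i=2}^{k+2}\psi_{=\varsigma(i)}:k\in\mathbb{N}\}$. A theory $\mathcal{T}$ is smooth w.r.t. $\{\sigma\}$ if for every quantifier-free formula $\phi$, every $\mathcal{T}$-interpretation $\mathcal{A}$ satisfying $\phi$, and every cardinal $\kappa\ge|\sigma^{\mathcal{A}}|$, some $\mathcal{T}$-interpretation $\mathcal{B}$ satisfies $\phi$ with $|\sigma^{\mathcal{B}}|=\kappa$. *)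

(* Defs.v *)
From HB Require Import structures.
From mathcomp Require Import all_boot all_order all_algebra.
From Stdlib Require Import ClassicalEpsilon.
Set Implicit Arguments. Unset Strict Implicit. Unset Printing Implicit Defensive.
Import GRing.Theory Num.Theory.

(* Turing machines (2 symbols, bi-infinite tape, blank = false).       *)
(* A machine with m states: states 'I_m, start state 0, halt = None.   *)
(* Each transition writes a symbol, moves left/right (true = right),   *)
(* and goes to a state or halts.                                       *)

Definition tm (m : nat) := 'I_m -> bool -> bool * bool * option 'I_m.

Definition tm_config (m : nat) := (option 'I_m * (int -> bool) * int)%type.

Definition tm_start (m : nat) : tm_config m :=
  (match m as m0 return option 'I_m0 with
   | 0 => None
   | m'.+1 => Some ord0
   end, (fun _ => false), 0%R).

Definition tm_step (m : nat) (M : tm m) (c : tm_config m) : tm_config m :=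
  let: (q, tape, pos) := c in
  match q with
  | None => c
  | Some s =>
      let: (w, mvr, q') := M s (tape pos) in
      (q', (fun z => if z == pos then w else tape z),
       if mvr then (pos + 1)%R else (pos - 1)%R)
  end.

Definition tm_run (m : nat) (M : tm m) (t : nat) : tm_config m :=
  iter t (tm_step M) (tm_start m).

Definition tape_ones (tape : int -> bool) (k : nat) : Prop :=
  exists s : seq int, [/\ uniq s, (forall z, (z \in s) = tape z) & size s = k].

Definition halts_with (m : nat) (M : tm m) (k : nat) : Prop :=
  exists t tape pos, tm_run M t = (None, tape, pos) /\ tape_ones tape k.

Definition is_bb_value (n k : nat) : Prop :=
  (exists m (M : tm m), m <= n /\ halts_with M k) /\
  (forall m (M : tm m) k', m <= n -> halts_with M k' -> k' <= k).

Definition busy_beaver (n : nat) : nat :=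
  epsilon (inhabits 0%N) (is_bb_value n).

(* First-order logic over the empty signature Sigma_1 (one sort sigma, *)
(* only equality), variables indexed by nat.                            *)

Inductive form : Type :=
  | FTrue | FFalse
  | FEq (x y : nat)
  | FNot (f : form)
  | FAnd (f g : form)
  | FOr (f g : form)
  | FEx (x : nat) (f : form)
  | FAll (x : nat) (f : form).

Fixpoint qfree (f : form) : Prop :=
  match f with
  | FTrue | FFalse | FEq _ _ => True
  | FNot g => qfree g
  | FAnd g h | FOr g h => qfree g /\ qfree h
  | FEx _ _ | FAll _ _ => False
  end.

Record interp : Type := Interp { dom : Type; val : nat -> dom }.

Definition upd (D : Type) (v : nat -> D) (x : nat) (d : D) : nat -> D :=
  fun y => if y == x then d else v y.

Fixpoint holds (D : Type) (v : nat -> D) (f : form) : Prop :=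
  match f with
  | FTrue => True
  | FFalse => False
  | FEq x y => v x = v y
  | FNot g => ~ holds v g
  | FAnd g h => holds v g /\ holds v h
  | FOr g h => holds v g \/ holds v h
  | FEx x g => exists d : D, holds (upd v x d) g
  | FAll x g => forall d : D, holds (upd v x d) g
  end.

Definition sat (A : interp) (f : form) : Prop := holds (val A) f.

Definition big_and (fs : seq form) : form := foldr FAnd FTrue fs.
Definition big_or (fs : seq form) : form := foldr FOr FFalse fs.
Definition exs (xs : seq nat) (f : form) : form := foldr FEx f xs.

Definition psi_ge (n : nat) : form :=
  exs (iota 1 n)
    (big_and [seq FNot (FEq i j) | i <- iota 1 n, j <- [seq j <- iota 1 n | i < j]]).

Definition psi_le (n : nat) : form :=
  exs (iota 1 n) (FAll 0 (big_or [seq FEq 0 i | i <- iota 1 n])).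

Definition psi_eq (n : nat) : form := FAnd (psi_ge n) (psi_le n).

Definition T_bb_axiom (k : nat) : form :=
  FOr (psi_ge (busy_beaver (k + 2)))
      (big_or [seq psi_eq (busy_beaver i) | i <- iota 2 (k + 1)]).

Definition theory := interp -> Prop.

Definition T_bb : theory := fun A => forall k, sat A (T_bb_axiom k).

(* Cardinals are represented by types; |A| <= kappa means an injection,
   |B| = kappa means a bijection. *)
Definition smooth (T : theory) : Prop :=
  forall (phi : form), qfree phi ->
  forall A : interp, T A -> sat A phi ->
  forall kappa : Type, (exists f : dom A -> kappa, injective f) ->
  exists B : interp, [/\ T B, sat B phi & exists g : dom B -> kappa, bijective g].

(* Main.v *)
Require Import Defs.
From mathcomp Require Import all_boot.
From mathcomp Require Import all_order all_algebra.
From mathcomp Require Import zify.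
From Stdlib Require Import FunctionalExtensionality ClassicalEpsilon Classical.
Import GRing.Theory Num.Theory Order.TTheory.
Set Implicit Arguments. Unset Strict Implicit.

Section Gen.
Variables (m : nat) (M : tm m).
Definition reach (c c' : tm_config m) := exists t, iter t (tm_step M) c = c'.
Lemma reach_refl c : reach c c. Proof. by exists 0%N. Qed.
Lemma reach_trans c1 c2 c3 : reach c1 c2 -> reach c2 c3 -> reach c1 c3.
Proof. by move=> [t1 <-] [t2 <-]; exists (t2 + t1)%N; rewrite iterD. Qed.
Lemma step_reach s tape (pos : int) w d q :
  M s (tape pos) = (w, d, q) ->
  reach (Some s, tape, pos)
    (q, (fun z => if z == pos then w else tape z), if d then (pos + 1)%R else (pos - 1)%R).
Proof. by move=> H; exists 1%N; rewrite /= H. Qed.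
Lemma upd_same (tape : int -> bool) pos w : tape pos = w ->
  (fun z => if z == pos then w else tape z) = tape.
Proof. move=> H; apply: functional_extensionality => z; by case: eqP => // ->. Qed.
Lemma step_reach_same s tape (pos : int) d q :
  M s (tape pos) = (tape pos, d, q) ->
  reach (Some s, tape, pos) (q, tape, if d then (pos + 1)%R else (pos - 1)%R).
Proof. by move=> H; have := step_reach H; rewrite upd_same. Qed.

Lemma sr s tape (pos : int) b w d q : tape pos = b -> M s b = (w, d, q) ->
  reach (Some s, tape, pos)
    (q, (fun z => if z == pos then w else tape z), if d then (pos + 1)%R else (pos - 1)%R).
Proof. by move=> <-; apply: step_reach. Qed.
Lemma srs s tape (pos : int) b d q : tape pos = b -> M s b = (b, d, q) ->
  reach (Some s, tape, pos) (q, tape, if d then (pos + 1)%R else (pos - 1)%R).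
Proof. by move=> <-; apply: step_reach_same. Qed.

Lemma pass_right X : M X true = (true, true, Some X) ->
  forall (l : nat) (p : int) tape, (forall i : nat, (i < l)%N -> tape (p + i%:Z)%R = true) ->
  reach (Some X, tape, p) (Some X, tape, (p + l%:Z)%R).
Proof.
move=> HX; elim=> [|l IH] p tape H; first by rewrite addr0; apply: reach_refl.
have H0 : tape p = true by have := H 0%N isT; rewrite addr0.
apply: reach_trans (srs H0 HX) _.
have -> : (p + l.+1%:Z = (p + 1) + l%:Z)%R by lia.
apply: IH => i hi; have -> : (p + 1 + i%:Z = p + i.+1%:Z)%R by lia.
by apply: H.
Qed.
Lemma pass_left X : M X true = (true, false, Some X) ->
  forall (l : nat) (p : int) tape, (forall i : nat, (i < l)%N -> tape (p - i%:Z)%R = true) ->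
  reach (Some X, tape, p) (Some X, tape, (p - l%:Z)%R).
Proof.
move=> HX; elim=> [|l IH] p tape H; first by rewrite subr0; apply: reach_refl.
have H0 : tape p = true by have := H 0%N isT; rewrite subr0.
apply: reach_trans (srs H0 HX) _.
have -> : (p - l.+1%:Z = (p - 1) - l%:Z)%R by lia.
apply: IH => i hi; have -> : (p - 1 - i%:Z = p - i.+1%:Z)%R by lia.
by apply: H.
Qed.

Definition T (p : int) (a q : nat) (z : int) : bool :=
  ((p <= z)%R && (z < p + a%:Z)%R) || ((p + a%:Z + 1 <= z)%R && (z < p + a%:Z + 1 + q%:Z)%R).

Variables (E P1 P2 W Q2 Q1 : 'I_m).
Hypotheses (hE : M E true = (false, true, Some P1))
  (hP1t : M P1 true = (true, true, Some P1)) (hP1f : M P1 false = (false, true, Some P2))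
  (hP2t : M P2 true = (true, true, Some P2)) (hP2f : M P2 false = (true, true, Some W))
  (hW : M W false = (true, false, Some Q2))
  (hQ2t : M Q2 true = (true, false, Some Q2)) (hQ2f : M Q2 false = (false, false, Some Q1))
  (hQ1t : M Q1 true = (true, false, Some Q1)) (hQ1f : M Q1 false = (false, true, Some E)).

Lemma round p a q : reach (Some E, T p a.+1 q, p) (Some E, T (p+1) a q.+2, (p+1)%R).
Proof.
have e1 : T p a.+1 q p = true by rewrite /T; lia.
apply: reach_trans (sr e1 hE) _ => /=.
have -> : (fun z => if z == p then false else T p a.+1 q z) = T (p+1) a q.
  by apply: functional_extensionality => z; rewrite /T; case: eqP => [->|]; lia.
apply: reach_trans (pass_right hP1t (l := a) _) _.
  by move=> i hi; rewrite /T; lia.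
have e2 : T (p + 1) a q (p + 1 + a%:Z)%R = false by rewrite /T; lia.
apply: reach_trans (srs e2 hP1f) _ => /=.
apply: reach_trans (pass_right hP2t (l := q) _) _.
  by move=> i hi; rewrite /T; lia.
set pos := (_ + q%:Z)%R.
have e3 : T (p + 1) a q pos = false by rewrite /pos /T; lia.
apply: reach_trans (sr e3 hP2f) _ => /=.
set t2 := fun z => _.
have e4 : t2 (pos + 1)%R = false.
  rewrite /t2 (_ : (pos + 1 == pos)%R = false); last by lia.
  by rewrite /pos /T; lia.
apply: reach_trans (sr e4 hW) _ => /=.
have -> : (fun z => if z == (pos + 1)%R then true else t2 z) = T (p+1) a q.+2.
  apply: functional_extensionality => z; rewrite /t2.
  by case H1: (z == (pos + 1)%R); case H2: (z == pos); move: H1 H2; rewrite /pos /T; lia.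
apply: reach_trans (pass_left hQ2t (l := q.+1) _) _.
  by move=> i hi; rewrite /pos /T; lia.
have e5 : T (p + 1) a q.+2 (pos + 1 - 1 - q.+1%:Z)%R = false by rewrite /pos /T; lia.
apply: reach_trans (srs e5 hQ2f) _ => /=.
apply: reach_trans (pass_left hQ1t (l := a) _) _.
  by move=> i hi; rewrite /pos /T; lia.
have e6 : T (p + 1) a q.+2 (pos + 1 - 1 - q.+1%:Z - 1 - a%:Z)%R = false by rewrite /pos /T; lia.
apply: reach_trans (srs e6 hQ1f) _ => /=.
have -> : (pos + 1 - 1 - q.+1%:Z - 1 - a%:Z + 1 = p + 1)%R by rewrite /pos; lia.
exact: reach_refl.
Qed.

Lemma doubling a p q :
  reach (Some E, T p a q, p) (Some E, T (p + a%:Z) 0 (q + 2 * a), (p + a%:Z)%R).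
Proof.
elim: a p q => [|a IH] p q; first by rewrite addr0 muln0 addn0; apply: reach_refl.
apply: reach_trans (round _ _ _) _.
have -> : (p + a.+1%:Z = p + 1 + a%:Z)%R by lia.
have -> : (q + 2 * a.+1 = q.+2 + 2 * a)%N by lia.
exact: IH.
Qed.
End Gen.

Definition delta (j q : nat) (b : bool) : bool * bool * option nat :=
  match q with
  | 0 => (true, false, Some 6)
  | q'.+1 =>
    let i := q' %/ 6 in
    match q' %% 6 with
    | 0 => if b then (false, true, Some (i*6+1).+1)
           else if i.+1 < j then (false, true, Some (i.+1*6+0).+1) else (false, true, None)
    | 1 => if b then (true, true, Some q) else (false, true, Some (i*6+2).+1)
    | 2 => if b then (true, true, Some q) else (true, true, Some (i*6+3).+1)
    | 3 => (true, false, Some (i*6+4).+1)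
    | 4 => if b then (true, false, Some q) else (false, false, Some (i*6+5).+1)
    | _ => if b then (true, false, Some q) else (false, true, Some (i*6+0).+1)
    end
  end.

Definition Mj (j : nat) : tm (6*j).+1 := fun s b =>
  let d := delta j s b in (d.1.1, d.1.2, omap (@inord (6*j)) d.2).

Definition St (j i r : nat) : 'I_(6*j).+1 := inord (i*6+r).+1.
Arguments Mj : clear implicits. Arguments St : clear implicits.

Lemma Mj_St j i r b : (i < j)%N -> (r < 6)%N ->
  Mj j (St j i r) b = let d := delta j (i*6+r).+1 b in (d.1.1, d.1.2, omap (@inord (6*j)) d.2).
Proof. move=> hi hr; rewrite /Mj /St inordK //; lia. Qed.

Ltac dsimp := rewrite /delta modnMDl divnMDl //= ?addn0.

Section C.
Variables (j i : nat) (hij : (i < j)%N).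
Local Notation E := (St j i 0).
Lemma copy_doubling a p q :
  reach (Mj j) (Some E, T p a q, p) (Some E, T (p + a%:Z) 0 (q + 2 * a), (p + a%:Z)%R).
Proof.
apply: (@doubling _ _ E (St j i 1) (St j i 2) (St j i 3) (St j i 4) (St j i 5)); rewrite Mj_St //; dsimp; rewrite /St ?addn0; reflexivity.
Qed.
Lemma E_false : Mj j E false = (false, true, if (i.+1 < j)%N then Some (St j i.+1 0) else None).
Proof. rewrite Mj_St //; dsimp. by case: ifP => _ //=; rewrite /St addn0. Qed.
End C.

Lemma chain j d : forall i, (i + d.+1 = j)%N -> forall p a,
  exists p', reach (Mj j) (Some (St j i 0), T p a 0, p) (None, T p' 0 (a * 2 ^ d.+1), (p' + 1)%R).
Proof.
elim: d => [|d IH] i hij p a.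
  have hi : (i < j)%N by lia.
  have e : T (p + a%:Z) 0 (0 + 2 * a) (p + a%:Z)%R = false by rewrite /T; lia.
  exists (p + a%:Z)%R; apply: reach_trans (copy_doubling hi a p 0) _.
  apply: reach_trans (srs e (E_false hi)) _.
  rewrite ifN; last by lia.
  have -> : (0 + 2 * a = a * 2 ^ 1)%N by lia.
  exact: reach_refl.
have hi : (i < j)%N by lia.
have e : T (p + a%:Z) 0 (0 + 2 * a) (p + a%:Z)%R = false by rewrite /T; lia.
have [p' Hp'] := IH i.+1 ltac:(lia) (p + a%:Z + 1)%R (2 * a).
exists p'; apply: reach_trans (copy_doubling hi a p 0) _.
apply: reach_trans (srs e (E_false hi)) _.
rewrite ifT; last by lia.
have -> : T (p + a%:Z) 0 (0 + 2 * a) = T (p + a%:Z + 1) (2 * a) 0.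
  by apply: functional_extensionality => z; rewrite /T; lia.
by rewrite (_ : (a * 2 ^ d.+2 = 2 * a * 2 ^ d.+1)%N); last by rewrite expnS; lia.
Qed.

Lemma seed j : (0 < j)%N ->
  reach (Mj j) (tm_start (6*j).+1) (Some (St j 0 0), T 0 1 0, 0%R).
Proof.
move=> hj.
have e0 : (fun _ : int => false) 0%R = false by [].
have h0 : Mj j ord0 false = (true, false, Some (St j 0 5)) by reflexivity.
apply: reach_trans (sr e0 h0) _ => /=.
set t1 := fun z => _.
have e1 : t1 (0 - 1)%R = false by reflexivity.
have h1 : Mj j (St j 0 5) false = (false, true, Some (St j 0 0)).
  rewrite Mj_St //; dsimp; rewrite /St; reflexivity.
apply: reach_trans (sr e1 h1) _ => /=.
have -> : (0 - 1 + 1 = 0 :> int)%R by [].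
have -> : (fun z => if z == (0 - 1)%R then false else t1 z) = T 0 1 0.
  apply: functional_extensionality => z; rewrite /t1.
  by case H1: (z == (0 - 1)%R); case H2: (z == 0%R); move: H1 H2; rewrite /T; lia.
exact: reach_refl.
Qed.

Lemma tape_ones_T p Q : tape_ones (T p 0 Q) Q.
Proof.
exists [seq (p + 1 + k%:Z)%R | k <- iota 0 Q]; split.
- rewrite map_inj_uniq ?iota_uniq // => x y; lia.
- move=> z; apply/mapP/idP.
    by move=> [k]; rewrite mem_iota => hk ->; rewrite /T; lia.
  rewrite /T => hz; exists (absz (z - p - 1)%R); first by rewrite mem_iota; lia.
  lia.
- by rewrite size_map size_iota.
Qed.

Lemma fam_halts j : (0 < j)%N -> halts_with (Mj j) (2 ^ j).
Proof.
move=> hj.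
have [p' Hp'] := @chain j j.-1 0 ltac:(lia) 0%R 1.
have [t Ht] := reach_trans (seed hj) Hp'.
exists t, (T p' 0 (1 * 2 ^ j.-1.+1)), (p' + 1)%R; split; first exact: Ht.
by rewrite mul1n prednK //; apply: tape_ones_T.
Qed.

Lemma iter_none m (M : tm m) n tape pos :
  iter n (tm_step M) (None, tape, pos) = (None, tape, pos).
Proof. by elim: n => //= n ->. Qed.

Lemma tape_ones_uniq tape k k' : tape_ones tape k -> tape_ones tape k' -> k = k'.
Proof.
move=> [s [us ms <-]] [s' [us' ms' <-]]; apply: perm_size; apply: uniq_perm => // z.
by rewrite ms ms'.
Qed.

Lemma halts_uniq m (M : tm m) k k' : halts_with M k -> halts_with M k' -> k = k'.
Proof.
move=> [t [tp [ps [Ht Ho]]]] [t' [tp' [ps' [Ht' Ho']]]].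
wlog le : t t' tp tp' ps ps' k k' Ht Ho Ht' Ho' / (t <= t')%N.
  move=> H; case: (leqP t t') => h; first exact: (H t t' tp tp' ps ps').
  by apply/esym; apply: (H t' t tp' tp ps' ps) => //; apply: ltnW.
move: Ht'; rewrite /tm_run -(subnK le) iterD -/(tm_run M t) Ht iter_none => -[e _].
by rewrite -e in Ho'; exact: tape_ones_uniq Ho Ho'.
Qed.

Definition tm_of m (f : {ffun 'I_m * bool -> bool * bool * option 'I_m}) : tm m :=
  fun s b => f (s, b).

Lemma bound_m m : exists B, forall (M : tm m) k, halts_with M k -> (k <= B)%N.
Proof.
pose hv (f : {ffun 'I_m * bool -> bool * bool * option 'I_m}) : nat :=
  epsilon (inhabits 0%N) (fun k => halts_with (tm_of f) k).
exists (\max_f hv f) => M k H.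
pose f := [ffun p : 'I_m * bool => M p.1 p.2].
have eM : tm_of f = M by apply: functional_extensionality => s;
  apply: functional_extensionality => b; rewrite /tm_of ffunE.
have Hf : halts_with (tm_of f) k by rewrite eM.
have : halts_with (tm_of f) (hv f) by apply: epsilon_spec; exists k.
move=> /(halts_uniq Hf) ->; exact: leq_bigmax.
Qed.

Lemma bound_n n : exists B, forall m (M : tm m) k, (m <= n)%N -> halts_with M k -> (k <= B)%N.
Proof.
elim: n => [|n [B HB]].
  have [B HB] := bound_m 0; exists B => m M k; rewrite leqn0 => /eqP ?; subst m; exact: HB.
have [B' HB'] := bound_m n.+1; exists (maxn B B') => m M k; rewrite leq_eqVlt => /orP [/eqP e|h] H.
  subst m.
  by rewrite leq_max (HB' _ _ H) orbT.
by rewrite leq_max (HB m M k h H).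
Qed.

Lemma max_exists (P : nat -> Prop) B : (exists k, P k) -> (forall k, P k -> (k <= B)%N) ->
  exists k, P k /\ forall k', P k' -> (k' <= k)%N.
Proof.
elim: B => [|B IH] [k Pk] HB.
  exists k; split => // k' /HB; have := HB k Pk; lia.
case: (classic (P B.+1)) => h; first by exists B.+1; split.
apply: IH; first by exists k.
move=> k' Pk'; have := HB k' Pk'; rewrite leq_eqVlt => /orP [/eqP e|] //.
by rewrite e in Pk'.
Qed.

Lemma bb_spec n : is_bb_value n (busy_beaver n).
Proof.
apply: epsilon_spec.
have [B HB] := bound_n n.
pose P := fun k => exists m (M : tm m), (m <= n)%N /\ halts_with M k.
have P0 : exists k, P k.
  exists 0%N, 0%N, (fun _ _ => (false, false, None)); split => //.
  exists 0%N, (fun _ => false), 0%R; split => //.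
  by exists [::].
have PB : forall k, P k -> (k <= B)%N by move=> k [m [M [h1 h2]]]; apply: (HB m M).
have [k [[m [M [hm hk]]] Hmax]] := max_exists P0 PB.
exists k; split; first by exists m, M.
by move=> m' M' k' h1 h2; apply: Hmax; exists m', M'.
Qed.

Lemma bb_ge n m (M : tm m) k : (m <= n)%N -> halts_with M k -> (k <= busy_beaver n)%N.
Proof. by move=> h1 h2; apply: (bb_spec n).2 h2. Qed.

Lemma bb_mono n n' : (n <= n')%N -> (busy_beaver n <= busy_beaver n')%N.
Proof.
move=> h; have [[m [M [hm hk]]] _] := bb_spec n; apply: bb_ge hk; exact: leq_trans h.
Qed.

Lemma bb_pos n : (0 < n)%N -> (0 < busy_beaver n)%N.
Proof.
move=> hn; apply: (@bb_ge n 1 (fun _ _ => (true, true, None))) => //.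
exists 1%N, (fun z => if z == 0%R then true else false), 1%R; split => //.
exists [:: 0%R]; split => // z; rewrite inE; by case: (z == 0%R).
Qed.

Lemma bb_fam j : (0 < j)%N -> (2 ^ j <= busy_beaver (6*j).+1)%N.
Proof. by move=> hj; apply: (bb_ge (M := Mj j)) => //; apply: fam_halts. Qed.

Lemma bb_gap : exists i, (2 <= i)%N /\ (busy_beaver i).+1 < busy_beaver i.+1.
Proof.
apply: NNPP => H.
have lin : forall d, (busy_beaver (2 + d) <= busy_beaver 2 + d)%N.
  elim=> [|d IH]; first by rewrite !addn0.
  have : ~~ ((busy_beaver (2 + d)).+1 < busy_beaver (2 + d).+1)%N.
    by apply/negP => h; apply: H; exists (2 + d)%N; split => //; rewrite leq_addr.
  rewrite -leqNgt addnS => h; apply: leq_trans h _; rewrite addnS ltnS //.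
set B := busy_beaver 2.
have hj : (0 < B + 10)%N by rewrite addn_gt0 orbT.
have := bb_fam hj; have := lin (6 * (B + 10)).-1.
rewrite (_ : (2 + (6 * (B + 10)).-1 = (6 * (B + 10)).+1)%N); last by lia.
move=> h1 h2; have := leq_trans h2 h1.
have : (7 * B + 70 < 2 ^ (B + 10))%N.
  elim: B {h1 h2 lin hj} => [|b IH]; first by [].
  rewrite addSn expnS; lia.
lia.
Qed.

Lemma holds_exs D (v : nat -> D) xs f :
  holds v (exs xs f) <-> exists w, (forall y, y \notin xs -> w y = v y) /\ holds w f.
Proof.
elim: xs v => [|x xs IH] v /=.
  split; first by move=> h; exists v.
  by move=> [w [hw hf]]; have -> : v = w by apply: functional_extensionality => y; rewrite hw.
split.
  move=> [d /IH [w [hw hf]]]; exists w; split => // y; rewrite inE negb_or => /andP [h1 h2].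
  by rewrite hw // /upd (negbTE h1).
move=> [w [hw hf]]; exists (w x); apply/IH; exists w; split => // y hy.
rewrite /upd; case: eqP => [->|/eqP h] //; apply: hw; by rewrite inE negb_or h.
Qed.

Lemma holds_and_map D (v : nat -> D) (F : nat -> Defs.form) s :
  holds v (big_and (map F s)) <-> forall x, x \in s -> holds v (F x).
Proof.
elim: s => [|x s IH] /=; first by split.
split; first by move=> [h1 /IH h2] y; rewrite inE => /orP [/eqP ->|/h2].
by move=> h; split; [apply: h; rewrite inE eqxx | apply/IH => y hy; apply: h; rewrite inE hy orbT].
Qed.

Lemma holds_and_cat D (v : nat -> D) a b :
  holds v (big_and (a ++ b)) <-> holds v (big_and a) /\ holds v (big_and b).
Proof. elim: a => [|x a IH] /=; [tauto | rewrite IH; tauto]. Qed.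

Lemma holds_or_map D (v : nat -> D) (F : nat -> Defs.form) s :
  holds v (big_or (map F s)) <-> exists2 x, x \in s & holds v (F x).
Proof.
elim: s => [|x s IH] /=; first by split => // -[].
split.
  move=> [h|/IH [y h1 h2]]; first by exists x; rewrite ?inE ?eqxx.
  by exists y; rewrite // inE h1 orbT.
move=> [y]; rewrite inE => /orP [/eqP ->|h1] h2; first by left.
by right; apply/IH; exists y.
Qed.

Lemma holds_pairs D (v : nat -> D) (F : nat -> nat -> Defs.form) s (t : nat -> seq nat) :
  holds v (big_and [seq F i j | i <- s, j <- t i]) <->
  forall i j, i \in s -> j \in t i -> holds v (F i j).
Proof.
elim: s => [|x s IH] /=; first by split.
rewrite holds_and_cat holds_and_map IH; split.
  move=> [h1 h2] i j; rewrite inE => /orP [/eqP ->|hi]; first exact: h1.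
  exact: h2.
move=> h; split; first by move=> j; apply: h; rewrite inE eqxx.
by move=> i j hi; apply: h; rewrite inE hi orbT.
Qed.

Lemma ge_sem D (v : nat -> D) n : holds v (psi_ge n) ->
  exists w : nat -> D, forall i j, (1 <= i)%N -> (i < j)%N -> (j <= n)%N -> w i <> w j.
Proof.
rewrite /psi_ge holds_exs => -[w [_ /holds_pairs h]]; exists w => i j h1 h2 h3.
have := h i j; rewrite /= mem_iota mem_filter mem_iota h2 /=.
apply; lia.
Qed.

Lemma le_sem D (v : nat -> D) n : holds v (psi_le n) ->
  exists w : nat -> D, forall d, exists i, [/\ (1 <= i)%N, (i <= n)%N & d = w i].
Proof.
rewrite /psi_le holds_exs => -[w [_ /= h]]; exists w => d.
have /holds_or_map [i] := h d; rewrite mem_iota /upd /= => hi.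
case: eqP => [e|_ e]; first by subst i.
exists i; split => //; lia.
Qed.

Lemma card_ge D (v : nat -> D) n K (g : D -> 'I_K) : bijective g -> holds v (psi_ge n) -> (n <= K)%N.
Proof.
move=> bg /ge_sem [w hw].
pose h (o : 'I_n) := g (w o.+1).
have hi : injective h.
  move=> o1 o2 /(bij_inj bg) e; apply/val_inj/eqP; apply/negPn/negP => ne.
  case: (ltngtP o1 o2) ne => // hlt _.
    by apply: (hw o1.+1 o2.+1) => //; lia.
  by apply: (hw o2.+1 o1.+1) => //; lia.
by have := leq_card h hi; rewrite !card_ord.
Qed.

Lemma card_le D (v : nat -> D) n K (g : D -> 'I_K) : bijective g -> holds v (psi_le n) -> (K <= n)%N.
Proof.
move=> [g' gK g'K] /le_sem [w hw].
pose h (o : 'I_n) := g (w o.+1).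
have sub : [set: 'I_K] \subset codom h.
  apply/subsetP => k _; have [i [h1 h2 e]] := hw (g' k).
  have hi : (i.-1 < n)%N by lia.
  apply/codomP; exists (Ordinal hi); rewrite /h /= prednK // -e g'K //.
have := subset_leq_card sub; rewrite cardsT card_ord => h1.
apply: leq_trans h1 _; apply: leq_trans (card_size _) _; by rewrite size_codom card_ord.
Qed.

Section Fin.
Variables (N : nat) (v : nat -> 'I_N).
Definition wN (n : nat) (y : nat) : 'I_N :=
  if y \in iota 1 n then insubd (v 0) y.-1 else v y.

Lemma ge_fin n : (n <= N)%N -> holds v (psi_ge n).
Proof.
move=> hn; rewrite /psi_ge holds_exs; exists (wN n); split.
  by move=> y /negbTE hy; rewrite /wN hy.
apply/holds_pairs => i j; rewrite mem_iota => hi; rewrite mem_filter mem_iota => /andP [hij hj] /=.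
rewrite /wN !mem_iota hi; rewrite (_ : (1 <= j < 1 + n)%N = true); last by lia.
move=> /(congr1 val); rewrite !val_insubd.
rewrite (_ : (i.-1 < N)%N = true); last by lia.
rewrite (_ : (j.-1 < N)%N = true); last by lia.
lia.
Qed.

Lemma le_fin : holds v (psi_le N).
Proof.
rewrite /psi_le holds_exs; exists (wN N); split.
  by move=> y /negbTE hy; rewrite /wN hy.
move=> /= d; apply/holds_or_map; exists d.+1; first by rewrite mem_iota; have := ltn_ord d; lia.
rewrite /upd /= /wN mem_iota (_ : (1 <= d.+1 < 1 + N)%N = true); last by have := ltn_ord d; lia.
by apply/val_inj; rewrite /= val_insubd /= ltn_ord.
Qed.
End Fin.

Theorem lemma50 : ~ smooth T_bb.
Proof.
move=> Hs.
have [i [hi2 hgap]] := bb_gap.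
have hN : (0 < busy_beaver i)%N by apply: bb_pos; lia.
set N := busy_beaver i in hN hgap.
pose A := Interp (fun _ : nat => (Ordinal hN : 'I_N)).
have TA : T_bb A.
  move=> k; rewrite /sat /T_bb_axiom /=.
  case: (leqP (k + 2) i) => h.
    by left; apply: ge_fin; apply: bb_mono.
  right; apply/holds_or_map; exists i; first by rewrite mem_iota; lia.
  split; [exact: ge_fin | exact: le_fin].
have inj : exists f : dom A -> 'I_N.+1, injective f.
  exists (widen_ord (leqnSn N)) => x y e; apply: val_inj; exact: (congr1 val e).
have [B [TB _ [g bg]]] := Hs FTrue I A TA I _ inj.
have := TB (i - 1)%N; rewrite /sat /T_bb_axiom (_ : (i - 1 + 2 = i.+1)%N); last by lia.
case=> [hge | /holds_or_map [l hl [hge hle]]].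
  by have := card_ge bg hge; lia.
have h1 := card_ge bg hge; have h2 := card_le bg hle.
move: hl; rewrite mem_iota => hl.
case: (leqP l i) => hli.
  by have := bb_mono hli; rewrite -/N; lia.
have el : l = i.+1 by lia.
by subst l; lia.
Qed.
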